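(* Fix $b>0$ and consider, for $\varepsilon\in(-b,\infty)$, the functions $\alpha(\varepsilon),\beta(\varepsilon),\gamma(\varepsilon)$ defined in the context. Then: $\alpha$ and $\beta$ are strictly decreasing in $\varepsilon$; $\gamma$, $\gamma-\alpha-2\beta$, $\gamma-\alpha+2\beta$ and $\gamma-\alpha$ are strictly increasing in $\varepsilon$; $\alpha+\gamma$ has a unique minimum at $\varepsilon=0$. Moreover $\alpha(0)=\gamma(0)=1$ and $\beta(0)=0$ for every $b>0$.
   Context: With $t=(b+\varepsilon)/b$: $\alpha=-t^2+2t-\frac4t+\frac4{t^2}$, $\beta=-t^3+t^2+t-3+\frac2t$, $\gamma=t^4-t^2+2t-1$. (These are the entries of the matrix $P(b,\varepsilon,0)=\begin{pmatrix}\alpha&\beta\\-\beta&\gamma\end{pmatrix}$, where $P(b,\varepsilon,k)$ is a transfer matrix of the tight-binding model.) *)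

(* Defs.v *)
(* statement over an arbitrary real field R (the claims are
   purely algebraic/order-theoretic, so this generalizes the reals). *)
From mathcomp Require Import all_boot all_order all_algebra.
Set Implicit Arguments. Unset Strict Implicit. Unset Printing Implicit Defensive.
Import Order.TTheory GRing.Theory Num.Theory.
Local Open Scope ring_scope.

Definition tpar (R : realFieldType) (b eps : R) : R := (b + eps) / b.

Definition alpha (R : realFieldType) (b eps : R) : R :=
  let t := tpar b eps in - t ^+ 2 + 2 * t - 4 / t + 4 / t ^+ 2.

Definition beta (R : realFieldType) (b eps : R) : R :=
  let t := tpar b eps in - t ^+ 3 + t ^+ 2 + t - 3 + 2 / t.

Definition gamma (R : realFieldType) (b eps : R) : R :=
  let t := tpar b eps in t ^+ 4 - t ^+ 2 + 2 * t - 1.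

Definition strictly_increasing_on (R : realFieldType) (b : R) (f : R -> R) : Prop :=
  forall e1 e2 : R, - b < e1 -> e1 < e2 -> f e1 < f e2.

Definition strictly_decreasing_on (R : realFieldType) (b : R) (f : R -> R) : Prop :=
  forall e1 e2 : R, - b < e1 -> e1 < e2 -> f e2 < f e1.

(* Main.v *)
Require Import Defs.
From mathcomp Require Import all_boot all_order all_algebra.
From mathcomp Require Import ring lra.
Set Implicit Arguments. Unset Strict Implicit.
Import Order.TTheory GRing.Theory Num.Theory.
Local Open Scope ring_scope.

Section S.
Variable R : realFieldType.
Implicit Types x y s p : R.

Lemma Na x y : 0 < x -> x < y ->
  0 < (x + y - 2)  *  (x * y)^+2 - 4  *  (x * y) + 4  *  (x + y).
Proof.
move=> hx hxy.
have hp : 0 < x * y by nra.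
have hs : 4  *  (x * y) <= (x+y)^+2 by nra.
set p := x * y in hp hs  * ; set s := x+y in hs  * .
have hs0 : 0 < s by rewrite /s; lra.
have h1 : 2 * p^+2 + 4 * p < s * (p^+2+4).
  have h2: (2 * p^+2+4 * p)^+2 < (s * (p^+2+4))^+2.
    have : (2 * p^+2+4 * p)^+2 < 4 * p * (p^+2+4)^+2 by nra.
    nra.
  have q: 0 <= 2 * p^+2+4 * p by nra.
  have q2: 0 <= s * (p^+2+4) by nra.
  by rewrite -(@ltr_pXn2r _ 2) ?nnegrE.
nra.
Qed.

Lemma Nb x y : 0 < x -> x < y ->
  0 < x * y * (x^+2+x * y+y^+2-x-y-1) + 2.
Proof.
move=> hx hxy.
have hp : 0 < x * y by nra.
have hs : 4 * (x * y) <= (x+y)^+2 by nra.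
have e : x^+2+x * y+y^+2-x-y-1 = (x+y)^+2 - x*y - (x+y) - 1 by ring.
rewrite e.
set p := x * y in hp hs *; set s := x+y in hs *.
have hs0 : 0 < s by rewrite /s; lra.
case: (lerP s 1) => h1.
  have h5 : 4 * p <= 1 by nra.
  have h6 : s^+2 - p - s - 1 >= -2 by nra.
  have h7 : 0 <= p * (s^+2 - p - s - 1 + 2) by apply: mulr_ge0; lra.
  have e2 : p * (s^+2 - p - s - 1 + 2) = p * (s^+2 - p - s - 1) + 2 * p by ring.
  lra.
case: (lerP p 1) => h2.
  have h8 : 0 < p * (s^+2 - s) by apply: mulr_gt0; nra.
  have h9 : p * p <= 1 by nra.
  have e3 : p * (s^+2 - p - s - 1) = p * (s^+2 - s) - p * p - p by ring.
  lra.
have h3 : 2 < s by nra.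
have h4 : 2 * (s^+2 - s) >= s^+2 by nra.
have h8 : 0 <= p * (2 * (s^+2 - s) - 4 * p) by apply: mulr_ge0; nra.
have e3 : p * (s^+2 - p - s - 1) = p * (2 * (s^+2 - s) - 4 * p)/2 + p * p - p by field.
have h9 : p <= p * p by nra.
lra.
Qed.

Lemma Ng x y : 0 < x -> x < y ->
  0 < x^+3+x^+2 * y+x * y^+2+y^+3 - (x+y) + 2.
Proof.
move=> hx hxy.
have c : forall z : R, 0 < z -> 0 < z^+3 - z + 1.
  move=> z hz; case: (lerP z 1) => hz1.
    have : 0 < z^+3 by apply: exprn_gt0.
    lra.
  have : 0 <= z^+3 - z.
    have -> : z^+3 - z = z * (z * z - 1) by ring.
    apply: mulr_ge0; nra.
  lra.
have := c x hx; have := c y ltac:(lra).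
have : 0 < x^+2 * y by apply: mulr_gt0; [exact: exprn_gt0 | lra].
have : 0 < x * y^+2 by apply: mulr_gt0; [lra | apply: exprn_gt0; lra].
lra.
Qed.


Lemma Pps s p : 0 < p -> 4 * p <= s^+2 -> 0 < s ->
  0 < s^+3 - 2 * s^+2 + 2 * s + 2 - 2 * p * (s - 1).
Proof.
move=> hp hs hs0; case: (lerP s 1) => h1.
  have : 0 <= - 2 * p * (s - 1) by nra.
  have : 0 <= s * (s-1)^+2 by apply: mulr_ge0; nra.
  nra.
have : 4 * (2 * p * (s - 1)) <= 2 * s^+2 * (s-1) by nra.
have : 0 < s * (s^+2 - 3 * s + 4).
  apply: mulr_gt0 => //.
  have : 0 <= (2 * s - 3)^+2 by apply: sqr_ge0.
  have -> : (2 * s - 3)^+2 = 4 * (s^+2 - 3 * s + 4) - 7 by ring.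
  lra.
have -> : s * (s^+2 - 3 * s + 4) = s^+3 - 3 * s^+2 + 4 * s by ring.
have -> : 2 * s^+2 * (s-1) = 2 * s^+3 - 2 * s^+2 by ring.
lra.
Qed.

Lemma Pps2 s p : 0 < p -> 4 * p <= s^+2 -> 2 <= s ->
  4 * (s - 2) < s^+3 - 2 * s^+2 + 2 * s + 2 - 2 * p * (s - 1).
Proof.
move=> hp hs hs0.
have : 4 * (2 * p * (s - 1)) <= 2 * s^+2 * (s-1) by nra.
have : 0 <= (s-2)^+3 by apply: exprn_ge0; lra.
have : 0 <= (2 * (s-2) - 2)^+2 by apply: sqr_ge0.
have -> : 2 * s^+2 * (s-1) = 2 * s^+3 - 2 * s^+2 by ring.
have -> : (s-2)^+3 = s^+3 - 6 * s^+2 + 12 * s - 8 by ring.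
have -> : (2 * (s-2) - 2)^+2 = 4 * s^+2 - 24 * s + 36 by ring.
lra.
Qed.

Definition G (t : R) := t^+4 - 2 * t^+3 + 2 * t^+2 + 2 * t + 8 / t - 4 / t^+2.

Definition PP x y := (x+y)^+3 - 2 * (x+y)^+2 + 2 * (x+y) + 2 - 2 * (x*y) * ((x+y) - 1).

Lemma G_diff x y : 0 < x -> 0 < y ->
  G y - G x = (y - x) * (PP x y + 4 * ((x + y) - 2 * (x * y)) / (x * y)^+2).
Proof.
move=> hx hy; rewrite /G /PP.
have hx0 : x != 0 by rewrite gt_eqF.
have hy0 : y != 0 by rewrite gt_eqF.
field; apply/andP; split => //.
Qed.

Lemma G_inc1 x y : 0 < x -> x < y -> y <= 1 -> G x < G y.
Proof.
move=> hx hxy hy.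
rewrite -subr_gt0 G_diff; try lra.
apply: mulr_gt0; first lra.
have h1 : 0 < PP x y by apply: Pps; nra.
have h2 : 0 <= 4 * ((x + y) - 2 * (x * y)) / (x * y)^+2.
  apply: divr_ge0; last by apply: exprn_ge0; nra.
  nra.
lra.
Qed.

Lemma G_inc2 x y : 1 <= x -> x < y -> G x < G y.
Proof.
move=> hx hxy.
rewrite -subr_gt0 G_diff; try lra.
apply: mulr_gt0; first lra.
have h1 : 4 * ((x+y) - 2) < PP x y by apply: Pps2; nra.
have hp : 1 <= x * y by nra.
have h3 : 2 * (x*y) - (x+y) <= (x+y-2) * (x*y).
  have : 0 <= y * (x-1)^+2 + x * (y-1)^+2.
    by apply: addr_ge0; apply: mulr_ge0; rewrite ?sqr_ge0 //; lra.
  have -> : y * (x-1)^+2 + x * (y-1)^+2 = (x+y-2) * (x*y) - (2 * (x*y) - (x+y)) by ring.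
  lra.
have h4 : (x+y-2) * (x*y) <= (x+y-2) * (x*y)^+2.
  rewrite -subr_ge0.
  have -> : (x+y-2) * (x*y)^+2 - (x+y-2) * (x*y) = (x+y-2) * ((x*y) * ((x*y)-1)) by ring.
  apply: mulr_ge0; first lra.
  apply: mulr_ge0; lra.
have h2 : - ((x + y) - 2) <= ((x + y) - 2 * (x * y)) / (x * y)^+2.
  have hq : 0 < (x*y)^+2 by nra.
  rewrite ler_pdivlMr //; nra.
lra.
Qed.

Lemma G_inc x y : 0 < x -> x < y -> G x < G y.
Proof.
move=> hx hxy.
case: (lerP y 1) => hy; first exact: G_inc1.
case: (lerP 1 x) => hx1; first exact: G_inc2.
apply: (@lt_trans _ _ (G 1)); first by apply: G_inc1; lra.
by apply: G_inc2; lra.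
Qed.


Definition fa (t : R) := - t ^+ 2 + 2 * t - 4 / t + 4 / t ^+ 2.
Definition fb (t : R) := - t ^+ 3 + t ^+ 2 + t - 3 + 2 / t.
Definition fg (t : R) := t ^+ 4 - t ^+ 2 + 2 * t - 1.

Lemma fa_dec x y : 0 < x -> x < y -> fa y < fa x.
Proof.
move=> hx hxy.
have hx0 : x != 0 by rewrite gt_eqF.
have hy0 : y != 0 by rewrite gt_eqF //; lra.
rewrite -subr_gt0.
have -> : fa x - fa y = (y - x) * ((x + y - 2) * (x*y)^+2 - 4 * (x*y) + 4 * (x + y)) / (x*y)^+2.
  by rewrite /fa; field; apply/andP; split.
apply: divr_gt0; last by apply: exprn_gt0; nra.
apply: mulr_gt0; first lra.
exact: Na.
Qed.

Lemma fb_dec x y : 0 < x -> x < y -> fb y < fb x.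
Proof.
move=> hx hxy.
have hx0 : x != 0 by rewrite gt_eqF.
have hy0 : y != 0 by rewrite gt_eqF //; lra.
rewrite -subr_gt0.
have -> : fb x - fb y = (y - x) * (x * y * (x^+2+x * y+y^+2-x-y-1) + 2) / (x*y).
  by rewrite /fb; field; apply/andP; split.
apply: divr_gt0; last by nra.
apply: mulr_gt0; first lra.
exact: Nb.
Qed.

Lemma fg_inc x y : 0 < x -> x < y -> fg x < fg y.
Proof.
move=> hx hxy.
rewrite -subr_gt0.
have -> : fg y - fg x = (y - x) * (x^+3+x^+2 * y+x * y^+2+y^+3 - (x+y) + 2).
  by rewrite /fg; ring.
apply: mulr_gt0; first lra.
exact: Ng.
Qed.

Lemma g2_eq t : 0 < t -> fg t - fa t + 2 * fb t = G t - 7.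
Proof.
move=> ht; have ht0 : t != 0 by rewrite gt_eqF.
by rewrite /fg /fa /fb /G; field.
Qed.

Lemma ag_eq t : 0 < t -> fa t + fg t = 2 + (t-1)^+2 * (t^+4 + 2 * t^+3 + t^+2 + 4 * t + 4) / t^+2.
Proof.
move=> ht; have ht0 : t != 0 by rewrite gt_eqF.
by rewrite /fg /fa; field.
Qed.

Lemma incr_t b (f : R -> R) : 0 < b -> (forall x y, 0 < x -> x < y -> f x < f y) ->
  strictly_increasing_on b (fun e => f (tpar b e)).
Proof.
move=> hb hf e1 e2 h1 h2; apply: hf.
  by rewrite /tpar; apply: divr_gt0 => //; lra.
by rewrite /tpar ltr_pM2r ?invr_gt0 //; lra.
Qed.

Lemma decr_t b (f : R -> R) : 0 < b -> (forall x y, 0 < x -> x < y -> f y < f x) ->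
  strictly_decreasing_on b (fun e => f (tpar b e)).
Proof.
move=> hb hf e1 e2 h1 h2; apply: hf.
  by rewrite /tpar; apply: divr_gt0 => //; lra.
by rewrite /tpar ltr_pM2r ?invr_gt0 //; lra.
Qed.

End S.

Theorem lemma7 (R : realFieldType) (b : R) (hb : 0 < b) :
  strictly_decreasing_on b (alpha b) /\
  strictly_decreasing_on b (beta b) /\
  strictly_increasing_on b (gamma b) /\
  strictly_increasing_on b (fun e => gamma b e - alpha b e - 2 * beta b e) /\
  strictly_increasing_on b (fun e => gamma b e - alpha b e + 2 * beta b e) /\
  strictly_increasing_on b (fun e => gamma b e - alpha b e) /\
  (forall e : R, - b < e -> e != 0 ->
     alpha b 0 + gamma b 0 < alpha b e + gamma b e) /\
  alpha b 0 = 1 /\ gamma b 0 = 1 /\ beta b 0 = 0.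
Proof.
have hb0 : b != 0 by rewrite gt_eqF.
have t0 : tpar b 0 = 1 by rewrite /tpar addr0 divff.
have Ea : alpha b = fun e => fa (tpar b e) by [].
have Eb : beta b = fun e => fb (tpar b e) by [].
have Eg : gamma b = fun e => fg (tpar b e) by [].
rewrite Ea Eb Eg.
split; first exact: decr_t (@fa_dec R).
split; first exact: decr_t (@fb_dec R).
split; first exact: incr_t (@fg_inc R).
split.
  apply: (incr_t (f := fun t => fg t - fa t - 2 * fb t)) => // x y hx hxy.
  have := fa_dec hx hxy; have := fb_dec hx hxy; have := fg_inc hx hxy; lra.
split.
  apply: (incr_t (f := fun t => fg t - fa t + 2 * fb t)) => // x y hx hxy.
  rewrite !g2_eq //; last lra.
  have := G_inc hx hxy; lra.
split.
  apply: (incr_t (f := fun t => fg t - fa t)) => // x y hx hxy.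
  have := fa_dec hx hxy; have := fg_inc hx hxy; lra.
rewrite t0.
have fa1 : fa 1 = 1 :> R by rewrite /fa; field.
have fg1 : fg 1 = 1 :> R by rewrite /fg; ring.
have fb1 : fb 1 = 0 :> R by rewrite /fb; field.
split; last by rewrite fa1 fg1 fb1.
move=> e he he0.
have ht : 0 < tpar b e by rewrite /tpar; apply: divr_gt0 => //; lra.
have ht1 : tpar b e != 1.
  apply/eqP; rewrite /tpar => h.
  have : b + e = b by move: h; rewrite -[in RHS](divff hb0) => /(congr1 (fun z => z * b)); rewrite !mulfVK.
  by move/eqP: he0; lra.
rewrite fa1 fg1 ag_eq //.
set t := tpar b e in ht ht1 *.
have : 0 < (t-1)^+2 * (t^+4 + 2 * t^+3 + t^+2 + 4 * t + 4) / t^+2.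
  apply: divr_gt0; last by apply: exprn_gt0.
  apply: mulr_gt0; first by rewrite exprn_even_gt0 //= subr_eq0.
  have : 0 < t^+4 by apply: exprn_gt0.
  have : 0 < t^+3 by apply: exprn_gt0.
  have : 0 < t^+2 by apply: exprn_gt0.
  lra.
lra.
Qed.
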